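(* Let $\{w_t\}$, $\{z_t\}$, $\{v_t\}$, $\{\hat D_t\}$ be generated by {\tt Scaled L-SVRG} with step-size $\eta>0$ and probability $p\in(0,1]$. Then for every $t\ge0$ and every $B>0$, $$\mathbb{E}_t\left[\|w_{t+1}-z_{t+1}\|^2\right]\le\frac{\eta^2}{\alpha}\mathbb{E}_t\left[\|v_t\|^2_{\hat D_t^{-1}}\right]+(1-p)(1+\eta B)\|w_t-z_t\|^2+(1-p)\frac{\eta}{\alpha B}\|\nabla P(w_t)\|^2_{\hat D_t^{-1}}.$$
   Context: $P=\frac1n\sum_{i=1}^nf_i$ with twice differentiable $f_i:\mathbb{R}^d\to\mathbb{R}$. $\|x\|_D^2=x^TDx$. For $J\subseteq[n]$, $\nabla^2P_J(w)=\frac1{|J|}\sum_{j\in J}\nabla^2 f_j(w)$; $\odot$ is the Hadamard product; $\mathrm{diag}(x)$ is the diagonal matrix with the entries of $x$. Preconditioner (parameters $\alpha>0$, $\beta\in(0,1)$, $m\ge1$): $D_0=\frac1m\sum_{j=1}^m\mathrm{diag}(z'_j\odot\nabla^2P_{\mathcal{J}_j}(w_0)z'_j)$, $D_t=\beta D_{t-1}+(1-\beta)\mathrm{diag}(z'_t\odot\nabla^2P_{\mathcal{J}_t}(w_t)z'_t)$ for $t\ge1$, with independent Rademacher vectors $z'$ and random index sets $\mathcal{J}\subseteq[n]$, independent of the gradient samples; $\hat D_t$ diagonal with $(\hat D_t)_{ii}=\max\{\alpha,|(D_t)_{ii}|\}$. {\tt Scaled L-SVRG}: $z_0=w_0$,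 $v_0=\nabla P(w_0)$; for $t\ge0$: $w_{t+1}=w_t-\eta\hat D_t^{-1}v_t$; $z_{t+1}=w_t$ with probability $p$ and $z_{t+1}=z_t$ with probability $1-p$; draw $i_{t+1}$ uniformly from $[n]$ independently; $v_{t+1}=\nabla f_{i_{t+1}}(w_{t+1})-\nabla f_{i_{t+1}}(z_{t+1})+\nabla P(z_{t+1})$; update $\hat D_{t+1}$. $\mathbb{E}_t$ denotes conditional expectation given $w_t$, $z_t$ and $\hat D_t$ (the remaining randomness being the index used in $v_t$ and the coin flip defining $z_{t+1}$). *)

(* Defs.v *)
From HB Require Import structures.
From mathcomp Require Import all_boot all_order all_algebra.
From mathcomp Require Import all_classical all_reals all_analysis.
Set Implicit Arguments. Unset Strict Implicit. Unset Printing Implicit Defensive.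
Import Order.TTheory GRing.Theory Num.Theory.
Import numFieldNormedType.Exports.
Local Open Scope ring_scope.

Section Defs.
Context {R : realType}.

Definition grad {d : nat} (f : 'cV[R]_d -> R) (x : 'cV[R]_d) : 'cV[R]_d :=
  \col_k ('d f x (delta_mx k 0)).

Definition hess {d : nat} (f : 'cV[R]_d -> R) (x : 'cV[R]_d) : 'M[R]_d :=
  \matrix_(k, l) (('d (grad f) x (delta_mx l 0)) k 0).

Definition sqn {d : nat} (x : 'cV[R]_d) : R := (x^T *m x) 0 0.
Definition dnorm2 {d : nat} (D : 'M[R]_d) (x : 'cV[R]_d) : R := (x^T *m D *m x) 0 0.

Definition hadamard {d : nat} (u v : 'cV[R]_d) : 'cV[R]_d := map2_mx *%R u v.
Definition diagv {d : nat} (u : 'cV[R]_d) : 'M[R]_d := diag_mx u^T.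

Definition Pavg {n d : nat} (f : 'I_n -> 'cV[R]_d -> R) : 'cV[R]_d -> R :=
  fun x => n%:R^-1 * \sum_(i < n) f i x.

Definition hessPJ {n d : nat} (f : 'I_n -> 'cV[R]_d -> R) (J : {set 'I_n})
  (w : 'cV[R]_d) : 'M[R]_d := #|J|%:R^-1 *: \sum_(j in J) hess (f j) w.

Definition Dhat {d : nat} (alpha : R) (D : 'M[R]_d) : 'M[R]_d :=
  diag_mx (\row_i Num.max alpha `|D i i|).

Definition Dinit {n d m : nat} (f : 'I_n -> 'cV[R]_d -> R) (zi : 'I_m -> 'cV[R]_d)
  (Ji : 'I_m -> {set 'I_n}) (w0 : 'cV[R]_d) : 'M[R]_d :=
  m%:R^-1 *: \sum_(j < m) diagv (hadamard (zi j) (hessPJ f (Ji j) w0 *m zi j)).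

Definition vdir {n d : nat} (f : 'I_n -> 'cV[R]_d -> R) (idx : nat -> 'I_n)
  (t : nat) (w z : 'cV[R]_d) : 'cV[R]_d :=
  if t is 0 then grad (Pavg f) w
  else grad (f (idx t)) w - grad (f (idx t)) z + grad (Pavg f) z.

(* Scaled L-SVRG trajectory: state at time t is (w_t, z_t, D_t), as a
   function of a realization of all the randomness:
   idx t  = i_t (index used in v_t, t >= 1),
   coin t = true iff z_t := w_{t-1} (event of probability p), t >= 1,
   zs t, Js t = Rademacher vector / index set used for D_t, t >= 1,
   zi j, Ji j (j < m) = those used for D_0. *)
Fixpoint slsvrg {n d m : nat} (f : 'I_n -> 'cV[R]_d -> R) (eta alpha beta : R)
  (w0 : 'cV[R]_d) (zi : 'I_m -> 'cV[R]_d) (Ji : 'I_m -> {set 'I_n})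
  (zs : nat -> 'cV[R]_d) (Js : nat -> {set 'I_n})
  (idx : nat -> 'I_n) (coin : nat -> bool) (t : nat)
  : 'cV[R]_d * 'cV[R]_d * 'M[R]_d :=
  match t with
  | 0 => (w0, w0, Dinit f zi Ji w0)
  | t'.+1 =>
    let st := slsvrg f eta alpha beta w0 zi Ji zs Js idx coin t' in
    let w := st.1.1 in let z := st.1.2 in let D := st.2 in
    let w' := w - eta *: (invmx (Dhat alpha D) *m vdir f idx t' w z) in
    let z' := if coin t then w else z in
    let D' := beta *: D + (1 - beta) *:
                diagv (hadamard (zs t) (hessPJ f (Js t) w' *m zs t)) in
    (w', z', D')
  end.

End Defs.

Definition upd {A : Type} (g : nat -> A) (s : nat) (a : A) : nat -> A :=
  fun k => if k == s then a else g k.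

(* E_t: expectation over the fresh index i (uniform on [n]) used in v_t and the
   fresh coin b (true with probability p) defining z_{t+1} *)
Definition Et {R : realType} {n : nat} (p : R) (X : 'I_n -> bool -> R) : R :=
  n%:R^-1 * \sum_(i < n) (p * X i true + (1 - p) * X i false).

(* Main.v *)
Require Import Defs.
From HB Require Import structures.
From mathcomp Require Import all_boot all_order all_algebra.
From mathcomp Require Import all_classical all_reals all_analysis.
From mathcomp Require Import ring lra.
Import Order.TTheory GRing.Theory Num.Theory.
Import numFieldNormedType.Exports.
Local Open Scope ring_scope.
Lemma vdir_upd (R : realType) (n d : nat) (f : 'I_n -> 'cV[R]_d -> R)
  (idx : nat -> 'I_n) t i k : (k < t)%N ->
  vdir f (upd idx t i) k = vdir f idx k.
Proof.
move=> lt; case: k lt => [|k] lt; first reflexivity.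
rewrite /vdir /upd.
by have -> : (k.+1 == t) = false by apply/negbTE; rewrite neq_ltn lt.
Qed.

Lemma slsvrg_upd (R : realType) (n d m : nat) (f : 'I_n -> 'cV[R]_d -> R)
  (alpha beta eta : R) (w0 : 'cV[R]_d)
  (zi : 'I_m -> 'cV[R]_d) (Ji : 'I_m -> {set 'I_n})
  (zs : nat -> 'cV[R]_d) (Js : nat -> {set 'I_n})
  (idx : nat -> 'I_n) (coin : nat -> bool) (t : nat) i b k :
  (k <= t)%N ->
  slsvrg f eta alpha beta w0 zi Ji zs Js (upd idx t i) (upd coin t.+1 b) k =
  slsvrg f eta alpha beta w0 zi Ji zs Js idx coin k.
Proof.
elim: k => [|k IH] lekt; first reflexivity.
have e1 : upd coin t.+1 b k.+1 = coin k.+1.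
  by rewrite /upd; case: eqP => // e; move: lekt; rewrite e ltnn.
have e2 := @vdir_upd _ _ _ f idx t i k lekt.
cbn [slsvrg].
rewrite IH; last by apply: ltnW.
rewrite e1 e2.
reflexivity.
Qed.
Lemma grad_Pavg (R : realType) (n d : nat) (f : 'I_n -> 'cV[R]_d -> R) x :
  (forall i x, differentiable (f i) x) ->
  grad (Pavg f) x = n%:R^-1 *: \sum_(i < n) grad (f i) x.
Proof.
move=> df.
have -> : Pavg f = n%:R^-1 *: \sum_(i < n) f i.
  apply/funext => y; rewrite /Pavg /=.
  by rewrite fct_sumE.
have ds : differentiable (\sum_(i < n) f i) x by apply: differentiable_sum.
apply/matrixP => k l; rewrite !mxE summxE diffZ //=.
rewrite -deriveE // derive_sum; last by move=> j; apply: diff_derivable.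
congr (_ * _); apply: eq_bigr => j _; rewrite !mxE deriveE //.
Qed.
Lemma invDhat (R : realType) d (alpha : R) (D : 'M[R]_d) : 0 < alpha ->
  invmx (Dhat alpha D) = diag_mx (\row_i (Num.max alpha `|D i i|)^-1).
Proof.
move=> a0.
set E := diag_mx _.
have h : Dhat alpha D *m E = 1%:M.
  rewrite /Dhat /E mulmx_diag; apply/matrixP => i j; rewrite !mxE.

  case: eqP => [->|]; last by rewrite mulr0n.
  rewrite mulfV //; apply: lt0r_neq0.
  by rewrite lt_max a0.
have [u _] := mulmx1_unit h.
by rewrite -[RHS](mulKmx u) h mulmx1.
Qed.
Lemma sqnE (R : realType) d (x : 'cV[R]_d) : sqn x = \sum_k x k 0 ^+ 2.
Proof. by rewrite /sqn mxE; apply: eq_bigr => k _; rewrite mxE expr2. Qed.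

Lemma dnormE (R : realType) d (r : 'rV[R]_d) (x : 'cV[R]_d) :
  dnorm2 (diag_mx r) x = \sum_k r 0 k * x k 0 ^+ 2.
Proof.
rewrite /dnorm2 mxE; apply: eq_bigr => k _; rewrite mul_mx_diag !mxE expr2.
by rewrite mulrCA mulrA.
Qed.

Lemma diag_mulE (R : realType) d (r : 'rV[R]_d) (x : 'cV[R]_d) k :
  (diag_mx r *m x) k 0 = r 0 k * x k 0.
Proof. by rewrite mul_diag_mx mxE. Qed.

Lemma key (R: realType) (p eta alpha B e y a g : R): 0 < alpha -> 0 < eta ->
  0 < p <= 1 -> 0 < B -> 0 < e -> e <= alpha^-1 ->
  p * (eta * (e * a)) ^+ 2 + (1 - p) * (y - eta * (e * a)) ^+ 2
   + 2 * (1 - p) * eta * e * y * (a - g)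
  <= eta ^+ 2 / alpha * (e * a ^+ 2) + (1 - p) * (1 + eta * B) * y ^+ 2
     + (1 - p) * (eta / (alpha * B)) * (e * g ^+ 2).
Proof.
move=> a0 et0 /andP[p0 p1] B0 e0 ea.
rewrite -subr_ge0.
have -> : eta ^+ 2 / alpha * (e * a ^+ 2) + (1 - p) * (1 + eta * B) * y ^+ 2
     + (1 - p) * (eta / (alpha * B)) * (e * g ^+ 2) -
   (p * (eta * (e * a)) ^+ 2 + (1 - p) * (y - eta * (e * a)) ^+ 2
   + 2 * (1 - p) * eta * e * y * (a - g)) =
   eta ^+ 2 * e * a ^+ 2 * (alpha^-1 - e) + (1 - p) * eta *
     ((B * y + e * g) ^+ 2 / B + e * g ^+ 2 / B * (alpha^-1 - e)).
  by field; apply/andP; split; apply: lt0r_neq0.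
have h1 : 0 <= alpha^-1 - e by rewrite subr_ge0.
apply: addr_ge0.
  apply: mulr_ge0 => //; apply: mulr_ge0; last exact: sqr_ge0.
  by apply: mulr_ge0; [exact: sqr_ge0| exact: ltW].
apply: mulr_ge0; first by apply: mulr_ge0; [rewrite subr_ge0|exact: ltW].
apply: addr_ge0; first by apply: divr_ge0; [exact: sqr_ge0|exact: ltW].
apply: mulr_ge0 => //; apply: divr_ge0; last exact: ltW.
by apply: mulr_ge0; [exact: ltW|exact: sqr_ge0].
Qed.
Lemma main_ineq (R : realType) n d (p eta alpha B : R) (r : 'rV[R]_d)
  (y g : 'cV[R]_d) (v : 'I_n -> 'cV[R]_d) :
  (0 < n)%N -> 0 < alpha -> 0 < eta -> 0 < p <= 1 -> 0 < B ->
  (forall k, 0 < r 0 k) -> (forall k, r 0 k <= alpha^-1) ->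
  \sum_i v i = n%:R *: g ->
  n%:R^-1 * \sum_i (p * sqn (- (eta *: (diag_mx r *m v i)))
                    + (1 - p) * sqn (y - eta *: (diag_mx r *m v i)))
  <= eta ^+ 2 / alpha * (n%:R^-1 * \sum_i (p * dnorm2 (diag_mx r) (v i)
                          + (1 - p) * dnorm2 (diag_mx r) (v i)))
     + (1 - p) * (1 + eta * B) * sqn y
     + (1 - p) * (eta / (alpha * B)) * dnorm2 (diag_mx r) g.
Proof.
move=> n0 a0 et0 p01 B0 r0 ra sv.
have nz : n%:R != 0 :> R by rewrite pnatr_eq0 -lt0n.
have dv : forall i, diag_mx r *m v i = \col_k (r 0 k * v i k 0).
  by move=> i; apply/matrixP => k l; rewrite ord1 diag_mulE mxE.
have E1 : forall i, p * sqn (- (eta *: (diag_mx r *m v i)))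
                    + (1 - p) * sqn (y - eta *: (diag_mx r *m v i)) =
   \sum_k (p * (eta * (r 0 k * v i k 0)) ^+ 2
           + (1 - p) * (y k 0 - eta * (r 0 k * v i k 0)) ^+ 2).
  move=> i; rewrite dv !sqnE !mulr_sumr -big_split; apply: eq_bigr => k _.
  by rewrite !mxE sqrrN.
under eq_bigr => i _ do rewrite E1.
have E2 : forall i, p * dnorm2 (diag_mx r) (v i) + (1 - p) * dnorm2 (diag_mx r) (v i)
   = \sum_k r 0 k * v i k 0 ^+ 2.
  by move=> i; rewrite dnormE; ring.
under [X in _ <= _ * (_ * X) + _ + _]eq_bigr => i _ do rewrite E2.
rewrite !sqnE !dnormE -addrA.
set C := \sum_k ((1 - p) * (1 + eta * B) * y k 0 ^+ 2
            + (1 - p) * (eta / (alpha * B)) * (r 0 k * g k 0 ^+ 2)).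
have -> : (1 - p) * (1 + eta * B) * (\sum_k y k 0 ^+ 2)
   + (1 - p) * (eta / (alpha * B)) * (\sum_k r 0 k * g k 0 ^+ 2) = C.
  by rewrite /C big_split /= !mulr_sumr.
have sg : forall k, \sum_i v i k 0 = n%:R * g k 0.
  by move=> k; rewrite -summxE sv mxE.
set c := fun (i : 'I_n) (k : 'I_d) =>
  2 * (1 - p) * eta * r 0 k * y k 0 * (v i k 0 - g k 0).
have c0 : \sum_i \sum_k c i k = 0.
  rewrite exchange_big /= big1 // => k _.
  rewrite /c; under eq_bigr => i _ do rewrite mulrBr.
  rewrite big_split /= sumrN -!mulr_sumr sg sumr_const card_ord.
  rewrite -mulr_natl; ring.
set L := \sum_i \sum_k _.
have LE : \sum_i \sum_k (p * (eta * (r 0 k * v i k 0)) ^+ 2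
         + (1 - p) * (y k 0 - eta * (r 0 k * v i k 0)) ^+ 2 + c i k) = L + \sum_i \sum_k c i k.
  by rewrite -big_split; apply: eq_bigr => i _; rewrite big_split.
rewrite c0 addr0 in LE; rewrite -LE.
have RE : n%:R^-1 * \sum_i \sum_k (eta ^+ 2 / alpha * (r 0 k * v i k 0 ^+ 2)
     + ((1 - p) * (1 + eta * B) * y k 0 ^+ 2
            + (1 - p) * (eta / (alpha * B)) * (r 0 k * g k 0 ^+ 2)))
   = eta ^+ 2 / alpha * (n%:R^-1 * \sum_i \sum_k r 0 k * v i k 0 ^+ 2) + C.
  rewrite (eq_bigr (fun i => eta ^+ 2 / alpha * \sum_k (r 0 k * v i k 0 ^+ 2) + C));
    last by move=> i _; rewrite big_split /= mulr_sumr.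
  rewrite big_split /= -mulr_sumr sumr_const card_ord -[C *+ n]mulr_natl.
  by field; rewrite nz (lt0r_neq0 a0).
rewrite -RE; apply: ler_wpM2l; first by rewrite invr_ge0 ler0n.
apply: ler_sum => i _; apply: ler_sum => k _.
rewrite addrA /c -!mulrA; move: (@key R p eta alpha B (r 0 k) (y k 0) (v i k 0) (g k 0) a0 et0 p01 B0 (r0 k) (ra k)).
by rewrite -!mulrA.
Qed.
Lemma sum3 (V : zmodType) n (F G : 'I_n -> V) c :
  \sum_(i < n) (F i - G i + c) = \sum_(i < n) F i - \sum_(i < n) G i + c *+ n.
Proof. by rewrite !big_split /= sumrN sumr_const card_ord. Qed.

Lemma alg_id (R : numFieldType) (V : lmodType R) n (a b : V) :
  n%:R != 0 :> R -> a - b + (n%:R^-1 *: b) *+ n = n%:R *: (n%:R^-1 *: a).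
Proof.
by move=> nz; rewrite -scaler_nat !scalerA mulfV // !scale1r subrK.
Qed.

Lemma sum_vdir (R : realType) n d (f : 'I_n -> 'cV[R]_d -> R) idx t w z :
  (0 < n)%N -> (forall i x, differentiable (f i) x) ->
  \sum_i vdir f (upd idx t i) t w z = n%:R *: grad (Pavg f) w.
Proof.
move=> n0 df.
have nz : n%:R != 0 :> R by rewrite pnatr_eq0 -lt0n.
case: t => [|t].
  rewrite (eq_bigr (fun _ => grad (Pavg f) w)); last by move=> i _; reflexivity.
  by rewrite sumr_const card_ord scaler_nat.
rewrite (eq_bigr (fun i => grad (f i) w - grad (f i) z + grad (Pavg f) z));
  last by move=> i _; rewrite /vdir /upd eqxx.
rewrite sum3.
rewrite (@grad_Pavg _ _ _ f w df) (@grad_Pavg _ _ _ f z df).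
exact: alg_id nz.
Qed.

Lemma rowpos (R : realType) d (alpha : R) (D : 'M[R]_d) k : 0 < alpha ->
  0 < (\row_i (Num.max alpha `|D i i|)^-1) 0 k.
Proof. by move=> a0; rewrite mxE invr_gt0 lt_max a0. Qed.

Lemma rowle (R : realType) d (alpha : R) (D : 'M[R]_d) k : 0 < alpha ->
  (\row_i (Num.max alpha `|D i i|)^-1) 0 k <= alpha^-1.
Proof.
move=> a0; rewrite mxE ler_pV2 ?inE ?unitfE ?lt_max ?a0 //=.
- by rewrite le_max lexx.
- by rewrite gt_eqF // lt_max a0.
- by rewrite gt_eqF.
Qed.

Theorem lemma5 (R : realType) (n d m : nat) (f : 'I_n -> 'cV[R]_d -> R)
  (alpha beta eta p B : R) (w0 : 'cV[R]_d)
  (zi : 'I_m -> 'cV[R]_d) (Ji : 'I_m -> {set 'I_n})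
  (zs : nat -> 'cV[R]_d) (Js : nat -> {set 'I_n})
  (idx : nat -> 'I_n) (coin : nat -> bool) (t : nat) :
  (0 < n)%N -> (1 <= m)%N ->
  (forall i x, differentiable (f i) x) ->
  (forall i x, differentiable (grad (f i)) x) ->
  0 < alpha -> 0 < beta < 1 -> 0 < eta -> 0 < p <= 1 -> 0 < B ->
  (forall j k, zi j k 0 = 1 \/ zi j k 0 = -1) ->
  (forall s k, zs s k 0 = 1 \/ zs s k 0 = -1) ->
  (forall j, (0 < #|Ji j|)%N) -> (forall s, (0 < #|Js s|)%N) ->
  let st := slsvrg f eta alpha beta w0 zi Ji zs Js idx coin t in
  let w := st.1.1 in let z := st.1.2 in let Dh := Dhat alpha st.2 in
  Et p (fun i b =>
    let st' := slsvrg f eta alpha beta w0 zi Ji zs Js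
                 (upd idx t i) (upd coin t.+1 b) t.+1 in
    sqn (st'.1.1 - st'.1.2))
  <= eta ^+ 2 / alpha * Et p (fun i b => dnorm2 (invmx Dh) (vdir f (upd idx t i) t w z))
     + (1 - p) * (1 + eta * B) * sqn (w - z)
     + (1 - p) * (eta / (alpha * B)) * dnorm2 (invmx Dh) (grad (Pavg f) w).
Proof.
move=> n0 m1 df dg a0 b01 et0 p01 B0 hz1 hz2 hJ1 hJ2.
cbv zeta.
set st := slsvrg f eta alpha beta w0 zi Ji zs Js idx coin t.
set w := st.1.1. set z := st.1.2. set Dh := Dhat alpha st.2.
have stE : forall i b,
  (slsvrg f eta alpha beta w0 zi Ji zs Js
                 (upd idx t i) (upd coin t.+1 b) t.+1).1.1 - (slsvrg f eta alpha beta w0 zi Ji zs Js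
                 (upd idx t i) (upd coin t.+1 b) t.+1).1.2 = w - eta *: (invmx Dh *m vdir f (upd idx t i) t w z) - (if b then w else z).
  move=> i b.
  have ub : upd coin t.+1 b t.+1 = b by rewrite /upd eqxx.
  cbn [slsvrg]. rewrite slsvrg_upd // ub.
  reflexivity.
have Dinv : invmx Dh = diag_mx (\row_i (Num.max alpha `|st.2 i i|)^-1).
  exact: invDhat.
have sv := @sum_vdir R n d f idx t w z n0 df.
have -> : Et p (fun i b => sqn
      ((slsvrg f eta alpha beta w0 zi Ji zs Js (upd idx t i)
          (upd coin t.+1 b) t.+1).1.1 -
       (slsvrg f eta alpha beta w0 zi Ji zs Js (upd idx t i)
          (upd coin t.+1 b) t.+1).1.2)) =
  n%:R^-1 * \sum_i (p * sqn (- (eta *: (invmx Dh *m vdir f (upd idx t i) t w z)))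
      + (1 - p) * sqn ((w - z) - eta *: (invmx Dh *m vdir f (upd idx t i) t w z))).
  rewrite /Et.
  congr (_ * _).
  apply: eq_bigr => i _.
  congr (_ + _); congr (_ * _); apply: f_equal.
    apply: (etrans (stE i true)).
    by rewrite addrAC subrr add0r.
  apply: (etrans (stE i false)).
  by rewrite addrAC.
rewrite /Et Dinv.
apply: main_ineq => //.
- by move=> k; apply: rowpos.
- by move=> k; apply: rowle.
Qed.
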